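(* Let $S$ be an AG-groupoid with a left identity, let $T$ be a left ideal of $S$ and let $B$ be a bi-ideal of $S$. Then $BT$ and $T^{2}B$ are bi-ideals of $S$.
   Context: An AG-groupoid (Abel-Grassmann's groupoid) is a set $S$ with a binary operation (written as juxtaposition) satisfying the left invertive law $(ab)c=(cb)a$ for all $a,b,c\in S$. A left identity is an element $e\in S$ with $ea=a$ for all $a\in S$. For nonempty subsets $A,B\subseteq S$, $AB=\{ab: a\in A, b\in B\}$ and $A^{2}=AA$. A left ideal is a nonempty subset $I$ with $SI\subseteq I$. A bi-ideal of $S$ is a nonempty subset $B$ with $BB\subseteq B$ (i.e. a sub-AG-groupoid) and $(BS)B\subseteq B$. *)

(* Defs.v *)
Set Implicit Arguments.

Definition left_invertive (S : Type) (mul : S -> S -> S) : Prop :=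
  forall a b c : S, mul (mul a b) c = mul (mul c b) a.

Definition is_left_identity (S : Type) (mul : S -> S -> S) (e : S) : Prop :=
  forall a : S, mul e a = a.

Definition setmul (S : Type) (mul : S -> S -> S) (A B : S -> Prop) : S -> Prop :=
  fun x => exists a b, A a /\ B b /\ x = mul a b.

Definition nonempty (S : Type) (A : S -> Prop) : Prop := exists x, A x.

Definition subset (S : Type) (A B : S -> Prop) : Prop := forall x, A x -> B x.

Definition full (S : Type) : S -> Prop := fun _ => True.

Definition left_ideal (S : Type) (mul : S -> S -> S) (I : S -> Prop) : Prop :=
  nonempty I /\ subset (setmul mul (@full S) I) I.

Definition bi_ideal (S : Type) (mul : S -> S -> S) (B : S -> Prop) : Prop :=
  nonempty B /\ subset (setmul mul B B) B /\
  subset (setmul mul (setmul mul B (@full S)) B) B.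

(* Main.v *)
Require Import Defs.

Lemma medial (S : Type) (mul : S -> S -> S) (hAG : left_invertive mul) :
  forall a b c d, mul (mul a b) (mul c d) = mul (mul a c) (mul b d).
Proof.
  intros a b c d. rewrite hAG. rewrite (hAG c d b). rewrite <- hAG. reflexivity.
Qed.

Lemma lswap (S : Type) (mul : S -> S -> S) (e : S) (hAG : left_invertive mul)
  (he : is_left_identity mul e) :
  forall a b c, mul a (mul b c) = mul b (mul a c).
Proof.
  intros a b c. transitivity (mul (mul e a) (mul b c)).
  { rewrite he. reflexivity. }
  rewrite medial by exact hAG. rewrite he. reflexivity.
Qed.

Theorem proposition1 (S : Type) (mul : S -> S -> S) (e : S)
  (hAG : left_invertive mul) (he : is_left_identity mul e)
  (T B : S -> Prop) (hT : left_ideal mul T) (hB : bi_ideal mul B) :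
  bi_ideal mul (setmul mul B T) /\
  bi_ideal mul (setmul mul (setmul mul T T) B).
Proof.
  destruct hT as [[t0 Ht0] HT]. destruct hB as [[b0 Hb0] [HBB HBSB]].
  assert (TS : forall s t, T t -> T (mul s t)).
  { intros s t Ht. apply HT. exists s, t. repeat split; auto. }
  assert (BB : forall x y, B x -> B y -> B (mul x y)).
  { intros x y Hx Hy. apply HBB. exists x, y. auto. }
  assert (BSB : forall x s y, B x -> B y -> B (mul (mul x s) y)).
  { intros x s y Hx Hy. apply HBSB. exists (mul x s), y. repeat split; auto.
    exists x, s. repeat split; auto. }
  split; split.
  - exists (mul b0 t0). exists b0, t0. auto.
  - split.
    + intros x [u [v [[b1 [t1 [Hb1 [Ht1 ->]]]] [[b2 [t2 [Hb2 [Ht2 ->]]]] ->]]]].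
      rewrite medial by exact hAG. exists (mul b1 b2), (mul t1 t2). auto.
    + intros x [u [v [[w [s [[b1 [t1 [Hb1 [Ht1 ->]]]] [_ ->]]]] [[b2 [t2 [Hb2 [Ht2 ->]]]] ->]]]].
      rewrite medial by exact hAG. exists (mul (mul b1 t1) b2), (mul s t2).
      repeat split; auto.
  - exists (mul (mul t0 t0) b0). exists (mul t0 t0), b0. repeat split; auto.
    exists t0, t0. auto.
  - split.
    + intros x [u [v [[p [b1 [[t1 [t2 [Ht1 [Ht2 ->]]]] [Hb1 ->]]]] [[q [b2 [[t3 [t4 [Ht3 [Ht4 ->]]]] [Hb2 ->]]]] ->]]]].
      rewrite medial by exact hAG.
      exists (mul (mul t1 t2) (mul t3 t4)), (mul b1 b2). repeat split; auto.
      exists (mul t1 t2), (mul t3 t4). auto.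
    + intros x [u [v [[w [s [[p [b1 [[t1 [t2 [Ht1 [Ht2 ->]]]] [Hb1 ->]]]] [_ ->]]]] [[q [b2 [[t3 [t4 [Ht3 [Ht4 ->]]]] [Hb2 ->]]]] ->]]]].
      rewrite (@lswap S mul e hAG he (mul (mul (mul t1 t2) b1) s) (mul t3 t4) b2).
      rewrite (hAG t1 t2 b1). rewrite (hAG (mul b1 t2) t1 s).
      rewrite (@lswap S mul e hAG he (mul s t1) b1 t2).
      exists (mul t3 t4), (mul (mul b1 (mul (mul s t1) t2)) b2).
      repeat split; auto. exists t3, t4. auto.
Qed.
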